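(* Let $c>0$, $\Delta_1,\dots,\Delta_K\in(0,1]$ and $T\ge K$. Let $\Psi_c\ge0$ be the unique solution $x\ge0$ of \[ \sum_{i=1}^K\Big(\mathbb{I}\{x\le\ln\Delta_i^{-1}\}e^{2x}+\mathbb{I}\{x>\ln\Delta_i^{-1}\}\frac{x-\ln\Delta_i^{-1}+c/2}{c\Delta_i^2/2}\Big)=T. \] Then an optimal solution of $\mathscr{P}_c(\{\max\{\Delta_i,e^{-\Psi_c}\}\}_{i=1}^K,T)$ is given by \[ x_i=\mathbb{I}\{\Psi_c\le\ln\Delta_i^{-1}\}e^{2\Psi_c}+\mathbb{I}\{\Psi_c>\ln\Delta_i^{-1}\}\frac{\Psi_c-\ln\Delta_i^{-1}+c/2}{c\Delta_i^2/2},\quad i=1,\dots,K. \]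
   Context: For $c>0$, $T\ge0$ and positive reals $D_1,\dots,D_K$, the program $\mathscr{P}_c(\{D_i\}_{i=1}^K,T)$ is: minimize $\sum_{i=1}^K\exp(-c x_iD_i^2)$ subject to $x_1+\dots+x_K=T$, $x_i\ge0$. The left-hand side of the defining equation of $\Psi_c$ is continuous and strictly increasing in $x\ge0$, equals $K$ at $x=0$, and tends to $\infty$, so $\Psi_c$ is well defined. *)

(* Defs.v *)
From HB Require Import structures.
From mathcomp Require Import all_boot all_order all_algebra.
From mathcomp Require Import all_classical all_reals all_analysis.
Set Implicit Arguments. Unset Strict Implicit. Unset Printing Implicit Defensive.
Import Order.TTheory GRing.Theory Num.Theory.
Local Open Scope ring_scope.

Definition psi_term (R : realType) (c Di x : R) : R :=
  if x <= ln Di^-1 then expR (2 * x)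
  else (x - ln Di^-1 + c / 2) / (c * Di ^+ 2 / 2).

Definition psi_lhs (R : realType) (K : nat) (c : R) (D : 'I_K -> R) (x : R) : R :=
  \sum_(i < K) psi_term c (D i) x.

Definition Pobj (R : realType) (K : nat) (c : R) (D : 'I_K -> R)
  (x : 'I_K -> R) : R :=
  \sum_(i < K) expR (- (c * x i * D i ^+ 2)).

Definition Pfeasible (R : realType) (K : nat) (T : R) (x : 'I_K -> R) : Prop :=
  \sum_(i < K) x i = T /\ forall i, 0 <= x i.

Definition Poptimal (R : realType) (K : nat) (c : R) (D : 'I_K -> R) (T : R)
  (x : 'I_K -> R) : Prop :=
  Pfeasible T x /\ forall y, Pfeasible T y -> Pobj c D x <= Pobj c D y.

(* Main.v *)
Require Import Defs.
From HB Require Import structures.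
From mathcomp Require Import all_boot all_order all_algebra.
From mathcomp Require Import all_classical all_reals all_analysis.
From mathcomp Require Import ring lra.
Import Order.TTheory GRing.Theory Num.Theory.
Local Open Scope ring_scope.

Lemma key (R : realType) (c d P : R) : 0 < c -> 0 < d ->
  c * (Num.max d (expR (- P))) ^+ 2 *
    expR (- (c * psi_term c d P * (Num.max d (expR (- P))) ^+ 2))
  = c * expR (- c - 2 * P).
Proof.
move=> hc hd.
have dpos : d \in Num.pos by rewrite posrE.
have eP0 : expR P != 0 by rewrite gt_eqF // expR_gt0.
have d0 : d != 0 by rewrite gt_eqF.
rewrite /psi_term lnV //.
have E2 : expR (- c - 2 * P) = expR (- c) * (expR P ^+ 2)^-1.
  by rewrite expRD -expRM_natl -expRN.
case: ifPn => h.
- have hle : d <= expR (- P).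
    by rewrite -[d](lnK dpos) ler_expR; lra.
  rewrite max_r // expRM_natl expRN.
  have -> : c * expR P ^+ 2 * (expR P)^-1 ^+ 2 = c by field.
  by rewrite E2; field.
- rewrite -ltNge in h.
  have hlt : expR (- P) < d.
    by rewrite -[X in _ < X](lnK dpos) ltr_expR; lra.
  rewrite max_l ?ltW //.
  have -> : c * ((P - - ln d + c / 2) / (c * d ^+ 2 / 2)) * d ^+ 2
      = c + 2 * P + 2 * ln d.
    field; rewrite ?gt_eqF //.
  have -> : - (c + 2 * P + 2 * ln d) = (- c - 2 * P) + - (2 * ln d) by ring.
  rewrite expRD expRN expRM_natl lnK //.
  field; exact: d0.
Qed.

Theorem lemma4 (R : realType) (K : nat) (c : R) (D : 'I_K -> R) (T : R)
  (Psi : R)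
  (hc : 0 < c) (hD : forall i, 0 < D i <= 1) (hT : K%:R <= T)
  (hPsi0 : 0 <= Psi) (hPsi : psi_lhs c D Psi = T) :
  Poptimal c (fun i => Num.max (D i) (expR (- Psi))) T
    (fun i => psi_term c (D i) Psi).
Proof.
have feas : Pfeasible T (fun i => psi_term c (D i) Psi).
  split; first by [].
  move=> i; have /andP[hd _] := hD i.
  rewrite /psi_term; case: ifPn => h; first exact/ltW/expR_gt0.
  rewrite -ltNge in h.
  apply/ltW/divr_gt0; last by rewrite !mulr_gt0 // ?exprn_gt0.
  lra.
split => // y [hy _].
set k := c * expR (- c - 2 * Psi).
rewrite /Pobj.
have step : forall i, expR (- (c * psi_term c (D i) Psi *
        Num.max (D i) (expR (- Psi)) ^+ 2))
      - k * (y i - psi_term c (D i) Psi)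
    <= expR (- (c * y i * Num.max (D i) (expR (- Psi)) ^+ 2)).
  move=> i; have /andP[hd _] := hD i.
  rewrite /k -(@key _ c (D i) Psi hc hd).
  set E := Num.max _ _ ^+ 2.
  set x := psi_term _ _ _.
  set a := - (c * x * E).
  have -> : - (c * y i * E) = a + (- (c * E * (y i - x))) by rewrite /a; ring.
  rewrite expRD.
  have := expR_ge1Dx (- (c * E * (y i - x))).
  have := expR_gt0 a.
  nra.
apply: le_trans; last by apply: ler_sum => i _; exact: step.
have Z : \sum_(i < K) k * (y i - psi_term c (D i) Psi) = 0.
  rewrite -mulr_sumr sumrB hy.
  have -> : \sum_(i < K) psi_term c (D i) Psi = T by [].
  by rewrite subrr mulr0.
by rewrite big_split /= sumrN Z oppr0 addr0.
Qed.
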